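(* For all $x,h\in\mathbb R$ with $h\ne0$, $$\exp\Big(\tfrac{(x^2-1)h^2}{24}-\tfrac{x^4h^4}{960}\Big)<\frac{\Phi(x+\frac h2)-\Phi(x-\frac h2)}{h\,\phi(x)}<\exp\Big(\tfrac{(x^2-1)h^2}{24}+\tfrac{h^4}{1440}\Big).$$ Moreover, $$\log\Big(\frac{\Phi(x+\frac h2)-\Phi(x-\frac h2)}{h\,\phi(x)}\Big)=\frac{(x^2-1)h^2}{24}+\frac{(-x^4-4x^2+2)h^4}{2880}+O(h^6)$$ uniformly for $x,h$ in bounded sets (with $h\ne 0$), where $\max_{x\in\mathbb R}(-x^4-4x^2+2)=2$ and $\min_{x\in\mathbb R\setminus\{0\}}(-x^4-4x^2+2)/x^4=-3$ (as an infimum over $x\neq 0$).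
   Context: $\Phi$ is the standard normal distribution function and $\phi=\Phi'$ its density. *)

(* Defs.v *)
From Stdlib Require Import Reals.
From Coquelicot Require Import Coquelicot.
Open Scope R_scope.

Definition phi (x : R) : R := exp (- x ^ 2 / 2) / sqrt (2 * PI).

Definition Phi (x : R) : R :=
  RInt_gen phi (Rbar_locally m_infty) (at_point x).

Definition ratio (x h : R) : R :=
  (Phi (x + h / 2) - Phi (x - h / 2)) / (h * phi x).

(* Main.v *)
Require Import Defs.
From Stdlib Require Import Reals Lra Lia Psatz Classical Factorial.
From Coquelicot Require Import Coquelicot.
Open Scope R_scope.

Lemma deriv_cont (f : R -> R) t l : is_derive f t l -> continuity_pt f t.
Proof.
  intros H. apply continuity_pt_filterlim.
  apply (@ex_derive_continuous R_AbsRing R_NormedModule f t). exists l. exact H.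
Qed.

Lemma mvt f df a b : a <= b -> (forall t, a <= t <= b -> is_derive f t (df t)) ->
  exists c, a <= c <= b /\ f b - f a = df c * (b - a).
Proof.
  intros Hab Hd.
  destruct (MVT_gen f a b df) as [c [Hc Hc2]].
  - intros t Ht. rewrite Rmin_left in Ht by lra. rewrite Rmax_right in Ht by lra.
    apply Hd; lra.
  - intros t Ht. rewrite Rmin_left in Ht by lra. rewrite Rmax_right in Ht by lra.
    apply (deriv_cont _ _ (df t)). apply Hd; lra.
  - rewrite Rmin_left in Hc by lra. rewrite Rmax_right in Hc by lra.
    exists c; split; auto.
Qed.

Lemma mono_le f df a b : a <= b -> (forall t, a <= t <= b -> is_derive f t (df t)) ->
  (forall t, a <= t <= b -> 0 <= df t) -> f a <= f b.
Proof.
  intros Hab Hd Hp. destruct (mvt f df a b Hab Hd) as [c [Hc E]].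
  assert (0 <= df c * (b - a)) by (apply Rmult_le_pos; [apply Hp; lra| lra]). lra.
Qed.

Lemma mono_lt f df a b : a < b -> (forall t, a <= t <= b -> is_derive f t (df t)) ->
  (forall t, a <= t <= b -> 0 < df t) -> f a < f b.
Proof.
  intros Hab Hd Hp. destruct (mvt f df a b (Rlt_le _ _ Hab) Hd) as [c [Hc E]].
  assert (0 < df c * (b - a)) by (apply Rmult_lt_0_compat; [apply Hp; lra| lra]). lra.
Qed.

Lemma mono_lt' f df a b : a < b -> (forall t, a <= t <= b -> is_derive f t (df t)) ->
  (forall t, a <= t <= b -> 0 <= df t) -> (forall t, a < t <= b -> 0 < df t) -> f a < f b.
Proof.
  intros Hab Hd Hp Hs.
  assert (f a <= f ((a+b)/2)).
  { apply (mono_le f df); [lra| intros; apply Hd; lra | intros; apply Hp; lra]. }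
  assert (f ((a+b)/2) < f b).
  { apply (mono_lt f df); [lra| intros; apply Hd; lra | intros; apply Hs; lra]. }
  lra.
Qed.

Definition ch (y : R) := (exp y + exp (- y)) / 2.
Definition sh (y : R) := (exp y - exp (- y)) / 2.

Lemma d_ch y : is_derive ch y (sh y).
Proof. unfold ch, sh. auto_derive; auto. simpl. field. Qed.
Lemma d_sh y : is_derive sh y (ch y).
Proof. unfold ch, sh. auto_derive; auto. simpl. field. Qed.

Lemma ch_even y : ch (- y) = ch y.
Proof. unfold ch. rewrite Ropp_involutive. field. Qed.

Lemma ch_pos y : 0 < ch y.
Proof. unfold ch. generalize (exp_pos y) (exp_pos (-y)). lra. Qed.

Lemma sh_nonneg y : 0 <= y -> 0 <= sh y.
Proof. intros H. unfold sh. assert (exp (-y) <= exp y).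
  { destruct (Req_dec y 0). subst. rewrite Ropp_0. lra. apply Rlt_le, exp_increasing. lra. }
  lra. Qed.

Lemma w_nonneg y : 0 <= y -> sh y <= y * ch y.
Proof.
  intros H.
  assert (0 * ch 0 - sh 0 <= y * ch y - sh y).
  { apply (mono_le (fun t => t * ch t - sh t) (fun t => t * sh t)); auto.
    - intros t Ht. generalize (d_ch t) (d_sh t); intros H1 H2.
      unfold ch, sh. auto_derive; auto. simpl. field.
    - intros t Ht. apply Rmult_le_pos; [lra| apply sh_nonneg; lra]. }
  unfold sh, ch in *. rewrite Ropp_0, exp_0 in H0. lra.
Qed.

Lemma exp_inv_mul a : exp a * exp (- a) = 1.
Proof. rewrite <- exp_plus. replace (a + - a) with 0 by lra. apply exp_0. Qed.

Lemma ch_lower_pos y : 0 <= y -> exp (y^2/2 - y^4/12) <= ch y.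
Proof.
  intros Hy.
  assert (HT : forall t, 0 <= t -> 0 <= sh t - (t - t^3/3) * ch t).
  { intros t Ht.
    assert (0 * 0 - (0 - 0^3/3) * ch 0 <= sh t - (t - t^3/3) * ch t).
    { replace (0 * 0) with (sh 0) by (unfold sh; rewrite Ropp_0; field).
      apply (mono_le (fun t => sh t - (t - t^3/3) * ch t)
                     (fun t => t^2 * ch t - (t - t^3/3) * sh t)); [lra| |].
      - intros z Hz. unfold ch, sh. auto_derive; auto. simpl. field.
      - intros z Hz. generalize (w_nonneg z ltac:(lra)) (sh_nonneg z ltac:(lra)) (ch_pos z).
        intros H1 H2 H3.
        destruct (Rle_dec (z - z^3/3) 0).
        + assert (0 <= z^2 * ch z) by (apply Rmult_le_pos; [nra|lra]).
          assert ((z - z^3/3) * sh z <= 0) by nra.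
          lra.
        + assert ((z - z^3/3) * sh z <= (z - z^3/3) * (z * ch z))
            by (apply Rmult_le_compat_l; lra).
          assert (0 <= z^4/3 * ch z) by (apply Rmult_le_pos; [nra|lra]).
          nra. }
    lra. }
  assert (H : ch 0 * exp (- 0^2/2 + 0^4/12) <= ch y * exp (- y^2/2 + y^4/12)).
  { apply (mono_le (fun t => ch t * exp (- t^2/2 + t^4/12))
                   (fun t => exp (- t^2/2 + t^4/12) * (sh t - (t - t^3/3) * ch t))); [lra| |].
    - intros z Hz. unfold ch, sh. auto_derive; auto. simpl; unfold Rdiv; field.
    - intros z Hz. apply Rmult_le_pos; [apply Rlt_le, exp_pos| apply HT; lra]. }
  replace (ch 0 * exp (- 0^2/2 + 0^4/12)) with 1 in H
    by (unfold ch; rewrite Ropp_0; replace (- 0^2/2 + 0^4/12) with 0 by field; rewrite exp_0; field).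
  assert (E := exp_inv_mul (y^2/2 - y^4/12)).
  replace (- (y^2/2 - y^4/12)) with (- y^2/2 + y^4/12) in E by field.
  assert (Hp := exp_pos (y^2/2 - y^4/12)). assert (Hc := ch_pos y).
  nra.
Qed.

Lemma ch_lower y : exp (y^2/2 - y^4/12) <= ch y.
Proof.
  destruct (Rle_dec 0 y). apply ch_lower_pos; auto.
  rewrite <- ch_even. replace (y^2/2 - y^4/12) with ((-y)^2/2 - (-y)^4/12) by field.
  apply ch_lower_pos. lra.
Qed.

Lemma ch_upper_pos y : 0 <= y -> ch y <= exp (y^2/6) * (1 + y^2/3).
Proof.
  intros Hy.
  assert (HP : forall t, 0 <= t -> 0 <= t * (9 + t^2) * ch t - 3 * (3 + t^2) * sh t).
  { intros t Ht.
    assert (0 * (9 + 0^2) * ch 0 - 3 * (3 + 0^2) * sh 0 <= t * (9 + t^2) * ch t - 3 * (3 + t^2) * sh t).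
    { apply (mono_le (fun t => t * (9 + t^2) * ch t - 3 * (3 + t^2) * sh t)
                     (fun t => t * (3 + t^2) * sh t)); [lra| |].
      - intros z Hz. unfold ch, sh. auto_derive; auto. simpl; unfold Rdiv; field.
      - intros z Hz. apply Rmult_le_pos; [nra| apply sh_nonneg; lra]. }
    replace (0 * (9 + 0^2) * ch 0 - 3 * (3 + 0^2) * sh 0) with 0 in H
      by (unfold sh; rewrite Ropp_0; field). lra. }
  assert (H : - (ch 0 * exp (- 0^2/6) / (1 + 0^2/3)) <= - (ch y * exp (- y^2/6) / (1 + y^2/3))).
  { apply (mono_le (fun t => - (ch t * exp (- t^2/6) / (1 + t^2/3)))
                   (fun t => exp (- t^2/6) * (t * (9 + t^2) * ch t - 3 * (3 + t^2) * sh t)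
                               / (9 * (1 + t^2/3)^2))); [lra| |].
    - intros z Hz. unfold ch, sh. auto_derive.
      + nra.
      + simpl; unfold Rdiv; field. nra.
    - intros z Hz. apply Rmult_le_pos.
      + apply Rmult_le_pos; [apply Rlt_le, exp_pos| apply HP; lra].
      + apply Rlt_le, Rinv_0_lt_compat. nra. }
  replace (ch 0 * exp (- 0^2/6) / (1 + 0^2/3)) with 1 in H
    by (unfold ch; rewrite Ropp_0; replace (- 0^2/6) with 0 by field; rewrite exp_0; field).
  assert (H2 : ch y * exp (- y^2/6) <= 1 + y^2/3).
  { assert (Hd : 0 < 1 + y^2/3) by nra.
    apply (Rmult_le_reg_r (/ (1 + y^2/3))). apply Rinv_0_lt_compat; auto.
    rewrite Rinv_r by lra. unfold Rdiv in H. lra. }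
  assert (E := exp_inv_mul (y^2/6)).
  replace (- (y^2/6)) with (- y^2/6) in E by field.
  assert (Hp := exp_pos (y^2/6)). assert (Hp' := exp_pos (- y^2/6)). assert (Hc := ch_pos y).
  assert (ch y = exp (y^2/6) * (ch y * exp (- y^2/6))) by (rewrite <- Rmult_assoc, (Rmult_comm _ (ch y)), Rmult_assoc, E; ring).
  rewrite H0. apply Rmult_le_compat_l; lra.
Qed.

Lemma ch_upper y : ch y <= exp (y^2/6) * (1 + y^2/3).
Proof.
  destruct (Rle_dec 0 y). apply ch_upper_pos; auto.
  rewrite <- ch_even. replace (y^2) with ((-y)^2) by field.
  apply ch_upper_pos. lra.
Qed.

Lemma L3 u : 0 <= u -> 1 <= exp (u/3 + u^2/90) * (1 - u/3 + 2*u^2/45)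
   /\ (0 < u -> 1 < exp (u/3 + u^2/90) * (1 - u/3 + 2*u^2/45)).
Proof.
  intros Hu.
  assert (Hd : forall z, is_derive (fun u => exp (u/3 + u^2/90) * (1 - u/3 + 2*u^2/45)) z
             (exp (z/3 + z^2/90) * (z^2/135 + 2 * z^3/2025))).
  { intros z. auto_derive; auto. simpl; unfold Rdiv; field. }
  assert (H0 : exp (0/3 + 0^2/90) * (1 - 0/3 + 2*0^2/45) = 1).
  { replace (0/3 + 0^2/90) with 0 by field. rewrite exp_0. field. }
  split.
  - rewrite <- H0 at 1. apply (mono_le _ _ 0 u Hu (fun z _ => Hd z)).
    intros z Hz. apply Rmult_le_pos; [apply Rlt_le, exp_pos| nra].
  - intros Hu'. rewrite <- H0 at 1. apply (mono_lt' _ _ 0 u Hu' (fun z _ => Hd z)).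
    + intros z Hz. apply Rmult_le_pos; [apply Rlt_le, exp_pos| nra].
    + intros z Hz. apply Rmult_lt_0_compat; [apply exp_pos| nra].
Qed.

Lemma exp_mono a b : a <= b -> exp a <= exp b.
Proof. intros H. destruct (Req_dec a b). subst; lra. apply Rlt_le, exp_increasing; lra. Qed.

Lemma sqrt2pi_pos : 0 < sqrt (2 * PI).
Proof. apply sqrt_lt_R0. generalize PI_RGT_0; lra. Qed.

Lemma phi_derive y : is_derive phi y (- y * phi y).
Proof. unfold phi. generalize sqrt2pi_pos; intro. auto_derive. lra. simpl; unfold Rdiv; field. lra. Qed.

Lemma phi_cont y : continuous phi y.
Proof. apply (@ex_derive_continuous R_AbsRing R_NormedModule). eexists; apply phi_derive. Qed.

Lemma phi_pos y : 0 < phi y.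
Proof. unfold phi. apply Rdiv_lt_0_compat. apply exp_pos. apply sqrt2pi_pos. Qed.

Definition F0 (y : R) : R := RInt phi 0 y.

Lemma F0_derive y : is_derive F0 y (phi y).
Proof.
  apply (is_derive_RInt phi F0 0 y).
  - apply filter_forall. intros b. unfold F0. apply (RInt_correct phi).
    apply ex_RInt_continuous. intros; apply phi_cont.
  - apply phi_cont.
Qed.

Lemma F0_0 : F0 0 = 0.
Proof. unfold F0. rewrite RInt_point. reflexivity. Qed.

Lemma F0_mono a b : a <= b -> F0 a <= F0 b.
Proof.
  intros H. apply (mono_le F0 phi a b H (fun t _ => F0_derive t)).
  intros; apply Rlt_le, phi_pos.
Qed.

Definition cst := exp (1/2) / sqrt (2 * PI).

Lemma F0_lb y : - cst <= F0 y.
Proof.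
  assert (Hc : 0 < cst) by (unfold cst; apply Rdiv_lt_0_compat; [apply exp_pos| apply sqrt2pi_pos]).
  destruct (Rle_dec 0 y).
  - generalize (F0_mono 0 y r). rewrite F0_0. lra.
  - assert (H : - (F0 y - cst * exp y) <= - (F0 0 - cst * exp 0)).
    { apply (mono_le (fun t => - (F0 t - cst * exp t)) (fun t => - (phi t - cst * exp t)) y 0).
      lra.
      - intros t _. apply (is_derive_opp (fun t => F0 t - cst * exp t)).
        apply (is_derive_minus F0 (fun t => cst * exp t)). apply F0_derive.
        auto_derive; auto. simpl; ring.
      - intros t _. unfold cst, phi.
        assert (exp (- t^2/2) <= exp (1/2) * exp t).
        { rewrite <- exp_plus. apply exp_mono. generalize (pow2_ge_0 (t+1)); intro; nra. }
        generalize sqrt2pi_pos; intro.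
        assert (exp (- t ^ 2 / 2) / sqrt (2 * PI) <= exp (1 / 2) / sqrt (2 * PI) * exp t).
        { unfold Rdiv. rewrite Rmult_assoc, (Rmult_comm (/ _)), <- Rmult_assoc.
          apply Rmult_le_compat_r. apply Rlt_le, Rinv_0_lt_compat; auto. auto. }
        lra. }
    rewrite F0_0, exp_0 in H. generalize (exp_pos y). nra.
Qed.

Lemma F0_lim : exists la, filterlim F0 (Rbar_locally m_infty) (locally la) /\
  forall y, la <= F0 y.
Proof.
  destruct (completeness (fun z => exists t, z = - F0 t)) as [M HM].
  - exists cst. intros z [t ->]. generalize (F0_lb t). lra.
  - exists (- F0 0). exists 0. reflexivity.
  - exists (- M). split.
    + apply filterlim_locally. intros eps.
      destruct (classic (exists t, M - eps < - F0 t)) as [[t0 Ht0]|Hn].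
      * exists t0. intros t Ht. unfold ball; simpl; unfold AbsRing_ball, abs, minus, plus, opp; simpl.
        assert (- F0 t <= M) by (apply HM; exists t; reflexivity).
        generalize (F0_mono t t0 (Rlt_le _ _ Ht)); intro.
        generalize (cond_pos eps); intro.
        apply Rabs_def1; lra.
      * exfalso. assert (M <= M - eps).
        { apply HM. intros z [t ->]. apply Rnot_lt_le. intro; apply Hn; exists t; auto. }
        generalize (cond_pos eps); lra.
    + intros y. assert (- F0 y <= M) by (apply HM; exists y; reflexivity). lra.
Qed.

Lemma Phi_diff a b : Phi b - Phi a = F0 b - F0 a.
Proof.
  destruct F0_lim as [la [Hl _]].
  assert (H : forall y, Phi y = F0 y - la).
  { intros y. unfold Phi. apply is_RInt_gen_unique.
    apply (is_RInt_gen_ext (Derive F0)).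
    - apply filter_forall. intros [p q] t _. apply is_derive_unique, F0_derive.
    - apply (is_RInt_gen_Derive F0 la (F0 y)).
      + apply filter_forall. intros [p q] t _. eexists; apply F0_derive.
      + apply filter_forall. intros [p q] t _.
        apply (continuous_ext phi). intros; symmetry; apply is_derive_unique, F0_derive.
        apply phi_cont.
      + exact Hl.
      + intros P HP. apply locally_singleton in HP. exact HP. }
  rewrite !H. ring.
Qed.

Lemma is_derive_eq (f : R -> R) x l l' : is_derive f x l -> l = l' -> is_derive f x l'.
Proof. intros H ->; exact H. Qed.

Definition KK (x s : R) := (F0 (x + s) - F0 (x - s)) / (2 * phi x).
Definition kf (x s : R) := exp (- s^2/2) * ch (x * s).

Lemma phi_shift x s : phi (x + s) = phi x * exp (- s^2/2) * exp (- (x * s)).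
Proof.
  unfold phi. generalize sqrt2pi_pos; intro.
  rewrite Rmult_assoc, <- exp_plus.
  replace (- (x + s)^2/2) with (- x^2/2 + (- s^2/2 + - (x*s))) by field.
  rewrite exp_plus. field. lra.
Qed.

Lemma KK_derive x s : is_derive (KK x) s (kf x s).
Proof.
  assert (H1 : is_derive (fun s => F0 (x + s)) s (phi (x + s))).
  { eapply is_derive_eq. apply (is_derive_comp F0 (fun s => x + s) s (phi (x+s)) 1).
    apply F0_derive. auto_derive; auto. unfold scal; simpl; unfold mult; simpl; lra. }
  assert (H2 : is_derive (fun s => F0 (x - s)) s (- phi (x - s))).
  { eapply is_derive_eq. apply (is_derive_comp F0 (fun s => x - s) s (phi (x-s)) (-1)).
    apply F0_derive. auto_derive; auto. unfold scal; simpl; unfold mult; simpl; lra. }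
  unfold KK. apply (is_derive_ext (fun s => / (2 * phi x) * (F0 (x + s) - F0 (x - s)))).
  { intros t. unfold Rdiv. apply Rmult_comm. }
  eapply is_derive_eq.
  apply (is_derive_scal (fun s => F0 (x + s) - F0 (x - s)) s (/ (2 * phi x))).
  apply (is_derive_minus (fun s => F0 (x + s)) (fun s => F0 (x - s))); eauto.
  unfold kf, ch. unfold minus, plus, opp; simpl.
  replace (x - s) with (x + - s) by ring.
  rewrite !phi_shift. generalize (phi_pos x); intro.
  replace ((- s)^2) with (s^2) by ring. replace (- (x * - s)) with (x * s) by ring.
  change (s*(s*1)) with (s^2). field. lra.
Qed.

Lemma KK_0 x : KK x 0 = 0.
Proof. unfold KK. replace (x + 0) with (x - 0) by ring. unfold Rdiv. ring. Qed.

Lemma ratio_KK x h : 0 < h -> ratio x h = KK x (h/2) / (h/2).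
Proof.
  intros Hh. unfold ratio, KK. rewrite Phi_diff. generalize (phi_pos x); intro.
  field. lra.
Qed.

Lemma jens a b : exp b * (1 + (a - b)) <= exp a /\ (a <> b -> exp b * (1 + (a - b)) < exp a).
Proof.
  replace (exp a) with (exp b * exp (a - b)) by (rewrite <- exp_plus; f_equal; ring).
  generalize (exp_pos b); intro. split.
  - apply Rmult_le_compat_l. lra. apply exp_ineq1_le.
  - intros. apply Rmult_lt_compat_l. lra. apply exp_ineq1. lra.
Qed.

Lemma chain f df a b s : 0 <= a -> a < b -> b <= s ->
  (forall t, 0 <= t <= s -> is_derive f t (df t)) ->
  (forall t, 0 <= t <= s -> 0 <= df t) -> (forall t, a <= t <= b -> 0 < df t) -> f 0 < f s.
Proof.
  intros Ha Hab Hb Hd Hp Hs.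
  assert (f 0 <= f a) by (apply (mono_le f df); [lra| intros; apply Hd; lra| intros; apply Hp; lra]).
  assert (f a < f b) by (apply (mono_lt f df); [lra| intros; apply Hd; lra| intros; apply Hs; lra]).
  assert (f b <= f s) by (apply (mono_le f df); [lra| intros; apply Hd; lra| intros; apply Hp; lra]).
  lra.
Qed.

Lemma kf_lower x t : exp ((x^2-1)*t^2/2 - x^4*t^4/12) <= kf x t.
Proof.
  unfold kf. replace ((x^2-1)*t^2/2 - x^4*t^4/12) with (- t^2/2 + ((x*t)^2/2 - (x*t)^4/12)) by field.
  rewrite exp_plus. apply Rmult_le_compat_l. apply Rlt_le, exp_pos. apply ch_lower.
Qed.

Lemma lower_main x s : 0 < s -> s * exp ((x^2-1)*s^2/6 - x^4*s^4/60) < KK x s.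
Proof.
  intros Hs.
  set (mf := fun t => (x^2-1)*t^2/6 - x^4*t^4/60).
  set (gf := fun t => (x^2-1)*t^2/2 - x^4*t^4/12).
  set (dL := fun t => exp (mf t) * (1 + (gf t - mf t))).
  assert (HdL : forall t, is_derive (fun t => t * exp (mf t)) t (dL t)).
  { intros t. unfold dL, mf, gf. auto_derive; auto. simpl; unfold Rdiv, Rminus; field. }
  assert (Hpt : forall t, dL t <= kf x t).
  { intros t. eapply Rle_trans; [apply (jens (gf t) (mf t)) | apply kf_lower]. }
  assert (Hst : forall t, gf t <> mf t -> dL t < kf x t).
  { intros t Ht. eapply Rlt_le_trans; [apply (jens (gf t) (mf t)); auto | apply kf_lower]. }
  assert (Hgm : forall t, gf t - mf t = t^2 * ((x^2-1)/3 - (x^2)^2*t^2/15)).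
  { intros t; unfold gf, mf; field. }
  set (z := fun t => (x^2-1)/3 - (x^2)^2*t^2/15).
  assert (HX : 0 <= x^2) by nra.
  assert (Hex : exists a b, 0 <= a /\ a < b /\ b <= s /\ forall t, a <= t <= b -> 0 < t /\ z t <> 0).
  { destruct (Rtotal_order (z (s/2)) 0) as [Hz|[Hz|Hz]]; unfold z in *.
    - exists (s/2), s. split; [lra|split;[lra|split;[lra|]]]. intros t Ht.
      assert ((x^2)^2 * (s/2)^2 <= (x^2)^2 * t^2).
      { apply Rmult_le_compat_l. nra. apply pow_incr. lra. }
      lra.
    - assert (x^2 <> 0) by (intro E; rewrite E in Hz; lra).
      exists (3*s/4), s. split; [lra|split;[lra|split;[lra|]]]. intros t Ht.
      assert ((x^2)^2 * (s/2)^2 < (x^2)^2 * t^2).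
      { assert (0 < x^2) by lra. assert (0 < (x^2)^2) by (apply pow_lt; lra). apply Rmult_lt_compat_l; auto. assert (s/2 < t) by lra. assert (0 < s/2) by lra. nra. }
      lra.
    - exists (s/4), (s/2). split; [lra|split;[lra|split;[lra|]]]. intros t Ht.
      assert ((x^2)^2 * t^2 <= (x^2)^2 * (s/2)^2).
      { apply Rmult_le_compat_l. nra. apply pow_incr. lra. }
      lra. }
  destruct Hex as [a [b [Ha [Hab [Hb Hz]]]]].
  assert (H := chain (fun t => KK x t - t * exp (mf t)) (fun t => kf x t - dL t) a b s Ha Hab Hb).
  assert (KK x 0 - 0 * exp (mf 0) < KK x s - s * exp (mf s)).
  { apply H.
    - intros t _. apply (is_derive_minus (KK x) (fun t => t * exp (mf t))). apply KK_derive. apply HdL.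
    - intros t _. generalize (Hpt t). lra.
    - intros t Ht. destruct (Hz t Ht) as [Ht0 Hzt]. apply Rlt_0_minus. apply Hst.
      intro E0. assert (E : gf t - mf t = 0) by lra. rewrite Hgm in E. apply Rmult_integral in E. destruct E as [E|E].
      + assert (0 < t^2) by (apply pow_lt; lra). lra.
      + apply Hzt. unfold z. exact E. }
  rewrite KK_0 in H0. unfold mf in H0. lra.
Qed.

Lemma kf_upper x t : kf x t <= exp ((x^2-1)*t^2/2 + 0) * 0 + exp (- t^2/2) * (exp ((x*t)^2/6) * (1 + (x*t)^2/3)).
Proof.
  rewrite Rmult_0_r, Rplus_0_l.
  unfold kf. apply Rmult_le_compat_l. apply Rlt_le, exp_pos. apply ch_upper.
Qed.

Lemma upper_pt x t : 0 <= t ->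
  kf x t <= exp ((x^2-1)*t^2/6 + t^4/90) * (1 + (x^2-1)*t^2/3 + 2*t^4/45) /\
  (0 < t -> kf x t < exp ((x^2-1)*t^2/6 + t^4/90) * (1 + (x^2-1)*t^2/3 + 2*t^4/45)).
Proof.
  intros Ht.
  assert (Hk := kf_upper x t). rewrite Rmult_0_r, Rplus_0_l in Hk.
  pose (u := t^2).
  pose (w := u/3 + u^2/90).
  pose (q := 1 - u/3 + 2*u^2/45).
  pose (Y := (x*t)^2/3).
  assert (E : exp ((x^2-1)*t^2/6 + t^4/90) * (1 + (x^2-1)*t^2/3 + 2*t^4/45)
            = exp (- t^2/2) * exp ((x*t)^2/6) * (exp w * (q + Y))).
  { rewrite <- exp_plus, <- Rmult_assoc, <- exp_plus. unfold w, q, Y, u.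
    replace (- t ^ 2 / 2 + (x * t) ^ 2 / 6 + (t ^ 2 / 3 + (t ^ 2) ^ 2 / 90))
      with ((x^2-1)*t^2/6 + t^4/90) by field.
    field. }
  rewrite E.
  assert (HY : 0 <= Y) by (unfold Y; nra).
  assert (Hw : 1 <= exp w).
  { rewrite <- exp_0. apply exp_mono. unfold w, u. nra. }
  assert (Hu : 0 <= u) by (unfold u; nra).
  destruct (L3 u Hu) as [L3a L3b].
  fold w q in L3a, L3b.
  assert (Hp : 0 < exp (- t^2/2) * exp ((x*t)^2/6)) by (apply Rmult_lt_0_compat; apply exp_pos).
  split.
  - eapply Rle_trans; [exact Hk|]. rewrite <- Rmult_assoc.
    apply Rmult_le_compat_l; [lra|]. unfold Y in *. nra.
  - intros Ht'. assert (Hu' : 0 < u) by (unfold u; nra).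
    specialize (L3b Hu').
    eapply Rle_lt_trans; [exact Hk|]. rewrite <- Rmult_assoc.
    apply Rmult_lt_compat_l; [lra|]. unfold Y in *. nra.
Qed.

Lemma upper_main x s : 0 < s -> KK x s < s * exp ((x^2-1)*s^2/6 + s^4/90).
Proof.
  intros Hs.
  set (Ef := fun t => (x^2-1)*t^2/6 + t^4/90).
  assert (HdU : forall t, is_derive (fun t => t * exp (Ef t)) t
      (exp ((x^2-1)*t^2/6 + t^4/90) * (1 + (x^2-1)*t^2/3 + 2*t^4/45))).
  { intros t. unfold Ef. auto_derive; auto. simpl; unfold Rdiv, Rminus; field. }
  assert (0 * exp (Ef 0) - KK x 0 < s * exp (Ef s) - KK x s).
  { apply (mono_lt' (fun t => t * exp (Ef t) - KK x t)
      (fun t => exp ((x^2-1)*t^2/6 + t^4/90) * (1 + (x^2-1)*t^2/3 + 2*t^4/45) - kf x t) 0 s Hs).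
    - intros t _. apply (is_derive_minus (fun t => t * exp (Ef t)) (KK x)). apply HdU. apply KK_derive.
    - intros t Ht. destruct (upper_pt x t ltac:(lra)). lra.
    - intros t Ht. destruct (upper_pt x t ltac:(lra)). specialize (H0 ltac:(lra)). lra. }
  rewrite KK_0 in H. unfold Ef in H. lra.
Qed.

Fixpoint Tn (n : nat) (y : R) : R :=
  match n with O => 0 | S m => Tn m y + y ^ m / INR (fact m) end.

Lemma Tn_derive n y : is_derive (Tn (S n)) y (Tn n y).
Proof.
  induction n.
  - simpl. eapply is_derive_eq. apply (is_derive_plus (fun _ => 0) (fun _ => 1 / 1)).
    apply is_derive_const. apply is_derive_const. simpl. unfold plus, zero; simpl. ring.
  - change (Tn (S (S n))) with (fun y => Tn (S n) y + y ^ (S n) / INR (fact (S n))).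
    assert (Hm : is_derive (fun y => y^(S n) / INR (fact (S n))) y (y^n / INR (fact n))).
    { apply (is_derive_ext (fun y => / INR (fact (S n)) * y^(S n))).
      intros; unfold Rdiv; apply Rmult_comm.
      eapply is_derive_eq. apply is_derive_scal. apply (is_derive_pow (fun y => y)).
      apply is_derive_id. change (Init.Nat.pred (S n)) with n.
      assert (H := INR_fact_neq_0 n). rewrite fact_simpl, mult_INR.
      change (/ (INR (S n) * INR (fact n)) * (INR (S n) * 1 * y ^ n) = y ^ n / INR (fact n)).
      field. split; auto. rewrite S_INR. generalize (pos_INR n); lra. }
    eapply is_derive_eq. apply (is_derive_plus (Tn (S n)) (fun y => y ^ (S n) / INR (fact (S n)))).
    apply IHn. apply Hm. reflexivity.
Qed.

Lemma Tn_0 n : Tn (S n) 0 = 1.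
Proof.
  induction n. simpl. field. change (Tn (S (S n)) 0) with (Tn (S n) 0 + 0 ^ (S n) / INR (fact (S n))).
  rewrite IHn, pow_i by lia. unfold Rdiv. rewrite Rmult_0_l. ring.
Qed.

Lemma Tn_rem n y : Rabs (exp y - Tn n y) <= Rabs y ^ n * exp (Rabs y).
Proof.
  revert y. induction n; intros y.
  - simpl. rewrite Rminus_0_r, Rabs_right by (apply Rle_ge, Rlt_le, exp_pos).
    rewrite Rmult_1_l. apply exp_mono. apply Rle_abs.
  - assert (Hd : forall t, is_derive (fun t => exp t - Tn (S n) t) t (exp t - Tn n t)).
    { intros t. apply (is_derive_minus exp (Tn (S n))). apply is_derive_Reals, derivable_pt_lim_exp.
      apply Tn_derive. }
    assert (Hc : forall c, Rabs c <= Rabs y -> Rabs (exp c - Tn n c) <= Rabs y ^ n * exp (Rabs y)).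
    { intros c Hc. eapply Rle_trans. apply IHn. apply Rmult_le_compat.
      apply pow_le, Rabs_pos. apply Rlt_le, exp_pos. apply pow_incr. split; auto. apply Rabs_pos.
      apply exp_mono; auto. }
    destruct (Rle_dec 0 y).
    + destruct (mvt _ _ 0 y r (fun t _ => Hd t)) as [c [Hc1 Hc2]].
      rewrite exp_0, Tn_0 in Hc2. replace (exp y - Tn (S n) y) with ((exp c - Tn n c) * (y - 0)) by lra.
      rewrite Rabs_mult. simpl. rewrite (Rmult_comm (Rabs y)), Rmult_assoc, (Rmult_comm (Rabs y)), <- Rmult_assoc.
      rewrite Rminus_0_r. apply Rmult_le_compat_r. apply Rabs_pos. apply Hc.
      rewrite !Rabs_right; lra.
    + destruct (mvt _ _ y 0 ltac:(lra) (fun t _ => Hd t)) as [c [Hc1 Hc2]].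
      rewrite exp_0, Tn_0 in Hc2. replace (exp y - Tn (S n) y) with (- ((exp c - Tn n c) * (0 - y))) by lra.
      rewrite Rabs_Ropp, Rabs_mult. simpl. rewrite (Rmult_comm (Rabs y)), Rmult_assoc, (Rmult_comm (Rabs y)), <- Rmult_assoc.
      replace (0 - y) with (- y) by ring. rewrite Rabs_Ropp. apply Rmult_le_compat_r. apply Rabs_pos. apply Hc.
      rewrite !Rabs_left1; lra.
Qed.

Lemma T3_eq y : Tn 3 y = 1 + y + y^2/2.
Proof. simpl. field. Qed.
Lemma T6_sym p : Tn 6 p + Tn 6 (-p) = 2 * (1 + p^2/2 + p^4/24).
Proof. simpl. field. Qed.

Lemma abs_mul_le a b P Q : Rabs a <= P -> Rabs b <= Q -> Rabs (a * b) <= P * Q.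
Proof. intros. rewrite Rabs_mult. apply Rmult_le_compat; auto; apply Rabs_pos. Qed.

Definition qf (x t : R) := 1 + (x^2-1)/2 * t^2 + (x^4/24 - x^2/4 + 1/8) * t^4.

Lemma kf_taylor B : 0 < B -> exists M, forall x t, Rabs x <= B -> 0 <= t <= B ->
  Rabs (kf x t - qf x t) <= M * t^6.
Proof.
  intros HB.
  set (E := exp (B^2)).
  assert (HE : 0 < E) by apply exp_pos.
  exists ((B^2/16 + B^4/48 + B^6/192) + (1+B^2+B^4) * (B^6 * E) + (1+B^4+B^8) * (E/8)
          + (E/8) * (B^12 * E)).
  intros x t Hx Ht.
  pose (v := t^2/2). pose (p := x*t).
  pose (A := 1 + - v + (- v)^2/2). pose (C := 1 + p^2/2 + p^4/24).
  pose (r1 := exp (- v) - A). pose (r2 := ch p - C).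
  assert (Hkf : kf x t = (A + r1) * (C + r2)).
  { unfold kf, r1, r2, v, p. replace (- t^2/2) with (- (t^2/2)) by field. ring. }
  assert (Hax : 0 <= Rabs x) by apply Rabs_pos.
  assert (Hx2 : x^2 <= B^2).
  { rewrite <- (pow2_abs x). apply pow_incr; lra. }
  assert (Hx4 : x^4 <= B^4).
  { replace (x^4) with ((x^2)^2) by ring. replace (B^4) with ((B^2)^2) by ring.
    apply pow_incr; split; [nra| lra]. }
  assert (Hx6 : x^6 <= B^6).
  { replace (x^6) with (x^2 * x^4) by ring. replace (B^6) with (B^2 * B^4) by ring.
    apply Rmult_le_compat; nra. }
  assert (Ht2 : t^2 <= B^2) by (apply pow_incr; lra).
  assert (Ht6 : t^6 <= B^6) by (apply pow_incr; lra).
  assert (Ht60 : 0 <= t^6) by (apply pow_le; lra).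
  assert (HB2 : 0 <= B^2) by nra.
  assert (HB4 : 0 <= B^4) by (apply pow_le; lra).
  assert (HB6 : 0 <= B^6) by (apply pow_le; lra).
  assert (HB8 : 0 <= B^8) by (apply pow_le; lra).
  assert (HB12 : 0 <= B^12) by (apply pow_le; lra).
  assert (Hx20 : 0 <= x^2) by nra.
  assert (Hx40 : 0 <= x^4) by (replace (x^4) with ((x^2)^2) by ring; nra).
  assert (Ht20 : 0 <= t^2) by nra.
  assert (Hr1 : Rabs r1 <= t^6 * (E/8)).
  { unfold r1. replace A with (Tn 3 (- v)) by (rewrite T3_eq; reflexivity).
    eapply Rle_trans. apply Tn_rem. rewrite Rabs_Ropp, Rabs_right by (unfold v; apply Rle_ge; lra).
    replace (t^6 * (E/8)) with (v^3 * E) by (unfold v; field).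
    apply Rmult_le_compat_l. apply pow_le. unfold v; lra.
    apply exp_mono. unfold v; lra. }
  assert (Hp : Rabs p <= B^2).
  { unfold p. rewrite Rabs_mult, (Rabs_right t) by lra. replace (B^2) with (B * B) by ring.
    apply Rmult_le_compat; lra. }
  assert (Hp6 : Rabs p ^ 6 <= B^6 * t^6).
  { unfold p. rewrite Rabs_mult, (Rabs_right t) by lra. rewrite Rpow_mult_distr.
    rewrite RPow_abs. rewrite Rabs_right by (apply Rle_ge; replace (x^6) with ((x^3)^2) by ring; nra).
    apply Rmult_le_compat_r; lra. }
  assert (Hr2 : Rabs r2 <= (B^6 * E) * t^6).
  { unfold r2, C, ch.
    replace ((exp p + exp (- p)) / 2 - (1 + p ^ 2 / 2 + p ^ 4 / 24))
      with (((exp p - Tn 6 p) + (exp (-p) - Tn 6 (-p))) / 2)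
      by (generalize (T6_sym p); intro; field_simplify; lra).
    assert (H1 := Tn_rem 6 p). assert (H2 := Tn_rem 6 (-p)). rewrite Rabs_Ropp in H2.
    assert (Rabs p ^ 6 * exp (Rabs p) <= (B^6 * E) * t^6).
    { replace ((B^6 * E) * t^6) with ((B^6 * t^6) * E) by ring.
      apply Rmult_le_compat. apply pow_le, Rabs_pos. apply Rlt_le, exp_pos. auto.
      unfold E; apply exp_mono; auto. }
    unfold Rdiv. rewrite Rabs_mult, (Rabs_right (/ 2)) by (apply Rle_ge, Rlt_le, Rinv_0_lt_compat; lra).
    generalize (Rabs_triang (exp p - Tn 6 p) (exp (- p) - Tn 6 (- p))). lra. }
  assert (HA : Rabs A <= 1 + B^2 + B^4).
  { apply Rabs_le. unfold A, v. split; nra. }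
  assert (HC : Rabs C <= 1 + B^4 + B^8).
  { assert (p^2 <= B^4).
    { rewrite <- (pow2_abs p). replace (B^4) with ((B^2)^2) by ring. apply pow_incr; split; auto. apply Rabs_pos. }
    assert (0 <= p^2) by nra.
    apply Rabs_le. unfold C. replace (p^4) with ((p^2)^2) by ring. replace (B^8) with ((B^4)^2) by ring. split; nra. }
  assert (HAC : Rabs (A * C - qf x t) <= (B^2/16 + B^4/48 + B^6/192) * t^6).
  { replace (A * C - qf x t) with (t^6 * (x^2/16 - x^4/48 + x^4 * t^2 / 192))
      by (unfold A, C, v, p, qf; field).
    rewrite Rabs_mult, Rabs_right by lra. rewrite Rmult_comm. apply Rmult_le_compat_r; auto.
    apply Rabs_le. assert (x^4 * t^2 <= B^4 * B^2) by (apply Rmult_le_compat; lra).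
    replace (B^6) with (B^4 * B^2) by ring. assert (0 <= x^4 * t^2) by nra. split; lra. }
  rewrite Hkf.
  replace ((A + r1) * (C + r2) - qf x t) with ((A * C - qf x t) + A * r2 + C * r1 + r1 * r2) by ring.
  assert (H1 := abs_mul_le _ _ _ _ HA Hr2).
  assert (H2 := abs_mul_le _ _ _ _ HC Hr1).
  assert (Hr2' : Rabs r2 <= B^12 * E).
  { eapply Rle_trans. exact Hr2. replace (B^12 * E) with ((B^6 * E) * B^6) by ring.
    apply Rmult_le_compat_l; [nra| auto]. }
  assert (H3 := abs_mul_le _ _ _ _ Hr1 Hr2').
  assert (Tr1 := Rabs_triang (A * C - qf x t + A * r2 + C * r1) (r1 * r2)).
  assert (Tr2 := Rabs_triang (A * C - qf x t + A * r2) (C * r1)).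
  assert (Tr3 := Rabs_triang (A * C - qf x t) (A * r2)).
  nra.
Qed.

Lemma KK_taylor B : 0 < B -> exists M, forall x s, Rabs x <= B -> 0 <= s <= B ->
  Rabs (KK x s - (s + (x^2-1)/6 * s^3 + (x^4/24 - x^2/4 + 1/8)/5 * s^5)) <= M * s^7.
Proof.
  intros HB. destruct (kf_taylor B HB) as [M HM].
  exists (M/7). intros x s Hx Hs.
  set (Pf := fun t => t + (x^2-1)/6 * t^3 + (x^4/24 - x^2/4 + 1/8)/5 * t^5).
  assert (HdP : forall t, is_derive Pf t (qf x t)).
  { intros t. unfold Pf, qf. auto_derive; auto. simpl; unfold Rdiv, Rminus; field. }
  assert (Hd7 : forall t, is_derive (fun t => M/7 * t^7) t (M * t^6)).
  { intros t. auto_derive; auto. simpl; unfold Rdiv, Rminus; field. }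
  assert (A1 : KK x s - Pf s - M/7 * s^7 <= KK x 0 - Pf 0 - M/7 * 0^7).
  { assert (- (KK x 0 - Pf 0 - M/7 * 0^7) <= - (KK x s - Pf s - M/7 * s^7)); [|lra].
    apply (mono_le (fun t => - (KK x t - Pf t - M/7 * t^7)) (fun t => - (kf x t - qf x t - M * t^6))).
    lra.
    - intros t _. apply (is_derive_opp (fun t => KK x t - Pf t - M/7 * t^7)).
      apply (is_derive_minus (fun t => KK x t - Pf t) (fun t => M/7 * t^7)); auto.
      apply (is_derive_minus (KK x) Pf); auto. apply KK_derive.
    - intros t Ht. assert (H := HM x t Hx ltac:(lra)). apply Rabs_le_between in H. lra. }
  assert (A2 : KK x 0 - Pf 0 + M/7 * 0^7 <= KK x s - Pf s + M/7 * s^7).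
  { apply (mono_le (fun t => KK x t - Pf t + M/7 * t^7) (fun t => kf x t - qf x t + M * t^6)).
    lra.
    - intros t _. apply (is_derive_plus (fun t => KK x t - Pf t) (fun t => M/7 * t^7)); auto.
      apply (is_derive_minus (KK x) Pf); auto. apply KK_derive.
    - intros t Ht. assert (H := HM x t Hx ltac:(lra)). apply Rabs_le_between in H. lra. }
  rewrite KK_0 in A1, A2. unfold Pf in A1, A2.
  replace (0 + (x^2-1)/6 * 0^3 + (x^4/24 - x^2/4 + 1/8)/5 * 0^5) with 0 in A1, A2 by field.
  apply Rabs_le. lra.
Qed.

Lemma ln_cubic m z : 0 < m <= 1 -> m <= z ->
  Rabs (ln z - (z - 1) + (z - 1)^2/2) <= Rabs (z - 1) ^ 3 / m.
Proof.
  intros Hm Hz.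
  set (g := fun t => ln t - (t - 1) + (t - 1)^2/2).
  assert (Hd : forall t, m <= t -> is_derive g t ((t-1)^2/t)).
  { intros t Ht. unfold g. auto_derive. lra. simpl; unfold Rdiv, Rminus; field. lra. }
  assert (Hg1 : g 1 = 0) by (unfold g; rewrite ln_1; field).
  assert (Hb : forall c, m <= c -> Rabs (c - 1) <= Rabs (z - 1) ->
            Rabs ((c-1)^2/c) <= Rabs (z - 1)^2 / m).
  { intros c Hc Hcz. rewrite Rabs_right.
    2:{ apply Rle_ge, Rmult_le_pos. apply pow2_ge_0. apply Rlt_le, Rinv_0_lt_compat; lra. }
    rewrite <- (pow2_abs (c - 1)).
    unfold Rdiv. apply Rmult_le_compat. nra. apply Rlt_le, Rinv_0_lt_compat; lra.
    apply pow_incr. split; auto; apply Rabs_pos.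
    apply Rinv_le_contravar; lra. }
  fold (g z).
  destruct (Rle_dec 1 z).
  - destruct (mvt g (fun t => (t-1)^2/t) 1 z r (fun t Ht => Hd t ltac:(lra))) as [c [Hc E]].
    rewrite Hg1, Rminus_0_r in E. rewrite E, Rabs_mult.
    replace (Rabs (z-1) ^ 3 / m) with (Rabs (z - 1)^2 / m * Rabs (z-1)) by (field; lra).
    apply Rmult_le_compat_r. apply Rabs_pos. apply Hb. lra.
    rewrite !Rabs_right; lra.
  - destruct (mvt g (fun t => (t-1)^2/t) z 1 ltac:(lra) (fun t Ht => Hd t ltac:(lra))) as [c [Hc E]].
    rewrite Hg1 in E. replace (g z) with (- ((c - 1)^2/c * (1 - z))) by lra.
    rewrite Rabs_Ropp, Rabs_mult.
    replace (Rabs (z-1) ^ 3 / m) with (Rabs (z - 1)^2 / m * Rabs (1 - z)) by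
      (rewrite (Rabs_minus_sym 1 z); field; lra).
    apply Rmult_le_compat_r. apply Rabs_pos. apply Hb. lra.
    rewrite !Rabs_left1; lra.
Qed.

Lemma assemble m0 K Aa Ab B a b s r : 0 < m0 <= 1 -> 0 <= s <= B -> Rabs a <= Aa -> Rabs b <= Ab ->
  0 <= K -> m0 <= r -> Rabs (r - (1 + a * s^2 + b * s^4)) <= K * s^6 ->
  Rabs (ln r - (a * s^2 + (b - a^2/2) * s^4)) <=
    (K + (Ab + K * B^2) * ((Aa + Ab * B^2 + K * B^4) + Aa) / 2 + (Aa + Ab * B^2 + K * B^4)^3 / m0) * s^6.
Proof.
  intros Hm Hs Ha Hb HK Hr He.
  set (K2 := Aa + Ab * B^2 + K * B^4).
  set (u := r - 1). set (e := u - a * s^2 - b * s^4).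
  assert (He' : Rabs e <= K * s^6) by (unfold e, u; replace (r - 1 - a * s^2 - b * s^4) with (r - (1 + a * s^2 + b * s^4)) by ring; auto).
  assert (Hs2 : 0 <= s^2) by nra.
  assert (Hs2B : s^2 <= B^2) by (apply pow_incr; lra).
  assert (Hs4 : s^4 = s^2 * s^2) by ring.
  assert (Hs6 : s^6 = s^2 * s^4) by ring.
  assert (HAa : 0 <= Aa) by (generalize (Rabs_pos a); lra).
  assert (HAb : 0 <= Ab) by (generalize (Rabs_pos b); lra).
  assert (Has : Rabs (a * s^2) <= Aa * s^2) by (rewrite Rabs_mult, (Rabs_right (s^2)) by lra; apply Rmult_le_compat_r; lra).
  assert (Hbs : Rabs (b * s^4) <= Ab * s^4) by (rewrite Rabs_mult, (Rabs_right (s^4)) by nra; apply Rmult_le_compat_r; nra).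
  assert (Hs4B : s^4 <= B^2 * s^2) by (rewrite Hs4; apply Rmult_le_compat_r; lra).
  assert (Hs6B' : s^6 <= B^2 * s^4) by (rewrite Hs6; apply Rmult_le_compat_r; nra).
  assert (Hs6B : s^6 <= B^4 * s^2).
  { assert (B^2 * s^4 <= B^2 * (B^2 * s^2)) by (apply Rmult_le_compat_l; nra).
    replace (B^4 * s^2) with (B^2 * (B^2 * s^2)) by ring. lra. }
  assert (Hu : Rabs u <= K2 * s^2).
  { replace u with (a * s^2 + b * s^4 + e) by (unfold e; ring).
    generalize (Rabs_triang (a * s^2 + b * s^4) e) (Rabs_triang (a * s^2) (b * s^4)). intros.
    unfold K2. assert (Ab * s^4 <= Ab * B^2 * s^2) by (rewrite Rmult_assoc; apply Rmult_le_compat_l; lra).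
    assert (K * s^6 <= K * B^4 * s^2) by (rewrite Rmult_assoc; apply Rmult_le_compat_l; lra).
    lra. }
  assert (HK2 : 0 <= K2) by (unfold K2; assert (0 <= B^2) by nra; assert (0 <= B^4) by nra; nra).
  assert (Hg : Rabs (ln r - u + u^2/2) <= K2^3 / m0 * s^6).
  { eapply Rle_trans. apply (ln_cubic m0 r Hm Hr). fold u.
    replace (K2^3 / m0 * s^6) with ((K2 * s^2)^3 / m0) by (field; lra).
    unfold Rdiv. apply Rmult_le_compat_r. apply Rlt_le, Rinv_0_lt_compat; lra.
    apply pow_incr. split; auto. apply Rabs_pos. }
  assert (Hum : Rabs (u - a * s^2) <= (Ab + K * B^2) * s^4).
  { replace (u - a * s^2) with (b * s^4 + e) by (unfold e; ring).
    generalize (Rabs_triang (b * s^4) e). intros.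
    assert (K * s^6 <= K * B^2 * s^4) by (rewrite Rmult_assoc; apply Rmult_le_compat_l; lra).
    lra. }
  assert (Hup : Rabs (u + a * s^2) <= (K2 + Aa) * s^2).
  { generalize (Rabs_triang u (a * s^2)). lra. }
  assert (Hprod := abs_mul_le _ _ _ _ Hum Hup).
  replace ((Ab + K * B ^ 2) * s ^ 4 * ((K2 + Aa) * s ^ 2)) with ((Ab + K * B^2) * (K2 + Aa) * s^6) in Hprod by ring.
  replace (ln r - (a * s^2 + (b - a^2/2) * s^4))
    with ((ln r - u + u^2/2) + (e - (u - a * s^2) * (u + a * s^2) / 2)) by (unfold e, u; field).
  fold K2.
  generalize (Rabs_triang (ln r - u + u ^ 2 / 2) (e - (u - a * s ^ 2) * (u + a * s ^ 2) / 2)).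
  generalize (Rabs_triang e (- ((u - a * s ^ 2) * (u + a * s ^ 2) / 2))).
  replace (e + - ((u - a * s ^ 2) * (u + a * s ^ 2) / 2)) with (e - (u - a * s ^ 2) * (u + a * s ^ 2) / 2) by ring.
  rewrite Rabs_Ropp.
  assert (Hq : Rabs ((u - a * s^2) * (u + a * s^2) / 2) <= (Ab + K*B^2)*(K2+Aa)*s^6/2).
  { unfold Rdiv. rewrite Rabs_mult, (Rabs_right (/2)) by (apply Rle_ge, Rlt_le, Rinv_0_lt_compat; lra). lra. }
  intros. lra.
Qed.

Lemma ratio_sym x h : h <> 0 -> ratio x (- h) = ratio x h.
Proof.
  intros Hh. unfold ratio. generalize (phi_pos x); intro.
  replace (x + - h / 2) with (x - h / 2) by field.
  replace (x - - h / 2) with (x + h / 2) by field.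
  field. split; lra.
Qed.

Lemma part1_pos x h : 0 < h ->
     exp ((x ^ 2 - 1) * h ^ 2 / 24 - x ^ 4 * h ^ 4 / 960) < ratio x h /\
     ratio x h < exp ((x ^ 2 - 1) * h ^ 2 / 24 + h ^ 4 / 1440).
Proof.
  intros Hh. rewrite ratio_KK by auto.
  assert (Hs : 0 < h/2) by lra.
  assert (Hl := lower_main x (h/2) Hs). assert (Hu := upper_main x (h/2) Hs).
  replace ((x ^ 2 - 1) * (h/2) ^ 2 / 6 - x ^ 4 * (h/2) ^ 4 / 60)
    with ((x ^ 2 - 1) * h ^ 2 / 24 - x ^ 4 * h ^ 4 / 960) in Hl by field.
  replace ((x ^ 2 - 1) * (h/2) ^ 2 / 6 + (h/2) ^ 4 / 90)
    with ((x ^ 2 - 1) * h ^ 2 / 24 + h ^ 4 / 1440) in Hu by field.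
  split.
  - apply (Rmult_lt_reg_r (h/2)); auto. replace (KK x (h / 2) / (h / 2) * (h / 2)) with (KK x (h/2)) by (field; lra).
    lra.
  - apply (Rmult_lt_reg_r (h/2)); auto. replace (KK x (h / 2) / (h / 2) * (h / 2)) with (KK x (h/2)) by (field; lra).
    lra.
Qed.

Lemma part1 x h : h <> 0 ->
     exp ((x ^ 2 - 1) * h ^ 2 / 24 - x ^ 4 * h ^ 4 / 960) < ratio x h /\
     ratio x h < exp ((x ^ 2 - 1) * h ^ 2 / 24 + h ^ 4 / 1440).
Proof.
  intros Hh. destruct (Rlt_dec 0 h). apply part1_pos; auto.
  rewrite <- ratio_sym by auto.
  replace (h^2) with ((-h)^2) by ring. replace (h^4) with ((-h)^4) by ring.
  apply part1_pos. lra.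
Qed.

Lemma part2 B : 0 < B -> exists C : R, forall x h : R,
     Rabs x <= B -> Rabs h <= B -> h <> 0 ->
     Rabs (ln (ratio x h)
           - ((x ^ 2 - 1) * h ^ 2 / 24
              + (- x ^ 4 - 4 * x ^ 2 + 2) * h ^ 4 / 2880)) <= C * h ^ 6.
Proof.
  intros HB. destruct (KK_taylor B HB) as [M HM].
  set (m0 := exp (- (B^2/24 + B^8/960))).
  set (K := Rabs M).
  set (Aa := (B^2 + 1)/6).
  set (Ab := (B^4/24 + B^2/4 + 1/8)/5).
  exists ((K + (Ab + K * B^2) * ((Aa + Ab * B^2 + K * B^4) + Aa) / 2 + (Aa + Ab * B^2 + K * B^4)^3 / m0) / 64).
  assert (Hm0 : 0 < m0 <= 1).
  { split. apply exp_pos. unfold m0. rewrite <- exp_0. apply exp_mono.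
    assert (0 <= B^2) by nra. assert (0 <= B^8) by (apply pow_le; lra). lra. }
  assert (HK : 0 <= K) by (unfold K; generalize (Rabs_pos M); lra).
  assert (Hpos : forall x h, Rabs x <= B -> 0 < h <= B ->
     Rabs (ln (ratio x h)
           - ((x ^ 2 - 1) * h ^ 2 / 24
              + (- x ^ 4 - 4 * x ^ 2 + 2) * h ^ 4 / 2880)) <=
     ((K + (Ab + K * B^2) * ((Aa + Ab * B^2 + K * B^4) + Aa) / 2 + (Aa + Ab * B^2 + K * B^4)^3 / m0) / 64) * h ^ 6).
  { intros x h Hx Hh.
    set (s := h/2).
    assert (Hs : 0 < s <= B) by (unfold s; lra).
    set (a := (x^2-1)/6). set (b := (x^4/24 - x^2/4 + 1/8)/5).
    assert (Hx2 : x^2 <= B^2) by (rewrite <- (pow2_abs x); apply pow_incr; split; [apply Rabs_pos| lra]).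
    assert (Hx20 : 0 <= x^2) by nra.
    assert (Hx4 : x^4 <= B^4).
    { replace (x^4) with ((x^2)^2) by ring. replace (B^4) with ((B^2)^2) by ring.
      apply pow_incr; split; lra. }
    assert (Hx40 : 0 <= x^4) by (replace (x^4) with ((x^2)^2) by ring; nra).
    assert (Ha : Rabs a <= Aa) by (unfold a, Aa; apply Rabs_le; split; lra).
    assert (Hb : Rabs b <= Ab) by (unfold b, Ab; apply Rabs_le; split; lra).
    assert (Hr : m0 <= ratio x h).
    { destruct (part1 x h ltac:(lra)) as [H1 _]. apply Rlt_le. eapply Rle_lt_trans; [|exact H1].
      unfold m0. apply exp_mono.
      assert (h^2 <= B^2) by (apply pow_incr; lra).
      assert (x^4 * h^4 <= B^4 * B^4).
      { apply Rmult_le_compat; auto. apply pow_le; lra. apply pow_incr; lra. }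
      replace (B^8) with (B^4 * B^4) by ring.
      assert (0 <= x^2 * h^2) by (apply Rmult_le_pos; nra).
      lra. }
    assert (He : Rabs (ratio x h - (1 + a * s^2 + b * s^4)) <= K * s^6).
    { rewrite ratio_KK by lra. fold s.
      assert (H := HM x s Hx ltac:(lra)).
      replace (KK x s / s - (1 + a * s ^ 2 + b * s ^ 4))
        with ((KK x s - (s + (x^2-1)/6 * s^3 + (x^4/24 - x^2/4 + 1/8)/5 * s^5)) / s)
        by (unfold a, b; field; lra).
      unfold Rdiv. rewrite Rabs_mult, (Rabs_right (/ s)) by (apply Rle_ge, Rlt_le, Rinv_0_lt_compat; lra).
      apply (Rmult_le_reg_r s). lra.
      rewrite Rmult_assoc, Rinv_l by lra. rewrite Rmult_1_r.
      replace (K * s^6 * s) with (Rabs M * s^7) by (unfold K; ring).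
      eapply Rle_trans. exact H. apply Rmult_le_compat_r. apply pow_le; lra.
      generalize (Rle_abs M). lra. }
    assert (H := assemble m0 K Aa Ab B a b s (ratio x h) Hm0 ltac:(lra) Ha Hb HK Hr He).
    replace ((x ^ 2 - 1) * h ^ 2 / 24 + (- x ^ 4 - 4 * x ^ 2 + 2) * h ^ 4 / 2880)
      with (a * s ^ 2 + (b - a ^ 2 / 2) * s ^ 4) by (unfold a, b, s; field).
    replace (h^6) with (64 * s^6) by (unfold s; field).
    replace (((K + (Ab + K * B^2) * ((Aa + Ab * B^2 + K * B^4) + Aa) / 2 + (Aa + Ab * B^2 + K * B^4)^3 / m0) / 64) * (64 * s^6))
      with ((K + (Ab + K * B^2) * ((Aa + Ab * B^2 + K * B^4) + Aa) / 2 + (Aa + Ab * B^2 + K * B^4)^3 / m0) * s^6)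
      by (field; lra).
    exact H. }
  intros x h Hx Hh Hh0.
  destruct (Rlt_dec 0 h).
  - apply Hpos; auto. split; auto. generalize (Rle_abs h); lra.
  - rewrite <- ratio_sym by auto.
    replace (h^2) with ((-h)^2) by ring. replace (h^4) with ((-h)^4) by ring.
    replace (h^6) with ((-h)^6) by ring.
    apply Hpos; auto. split. lra. rewrite <- Rabs_Ropp in Hh. generalize (Rle_abs (-h)); lra.
Qed.

Theorem lemma3p1 :
  (forall x h : R, h <> 0 ->
     exp ((x ^ 2 - 1) * h ^ 2 / 24 - x ^ 4 * h ^ 4 / 960) < ratio x h /\
     ratio x h < exp ((x ^ 2 - 1) * h ^ 2 / 24 + h ^ 4 / 1440)) /\
  (forall B : R, 0 < B -> exists C : R, forall x h : R,
     Rabs x <= B -> Rabs h <= B -> h <> 0 ->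
     Rabs (ln (ratio x h)
           - ((x ^ 2 - 1) * h ^ 2 / 24
              + (- x ^ 4 - 4 * x ^ 2 + 2) * h ^ 4 / 2880)) <= C * h ^ 6) /\
  ((forall x : R, - x ^ 4 - 4 * x ^ 2 + 2 <= 2) /\
   (exists x : R, - x ^ 4 - 4 * x ^ 2 + 2 = 2)) /\
  ((forall x : R, x <> 0 -> -3 <= (- x ^ 4 - 4 * x ^ 2 + 2) / x ^ 4) /\
   (exists x : R, x <> 0 /\ (- x ^ 4 - 4 * x ^ 2 + 2) / x ^ 4 = -3)).
Proof.
  split; [exact part1|]. split; [exact part2|]. split.
  - split.
    + intros x. assert (0 <= x^2) by nra. replace (x^4) with ((x^2)^2) by ring. nra.
    + exists 0. ring.
  - split.
    + intros x Hx. assert (0 < x^2) by (apply pow2_gt_0; auto).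
      assert (H4 : 0 < x^4) by (replace (x^4) with ((x^2)^2) by ring; nra).
      apply (Rmult_le_reg_r (x^4)); auto.
      replace ((- x ^ 4 - 4 * x ^ 2 + 2) / x ^ 4 * x ^ 4) with (- x ^ 4 - 4 * x ^ 2 + 2) by (field; lra).
      replace (x^4) with ((x^2)^2) by ring. generalize (pow2_ge_0 (x^2 - 1)); intro; nra.
    + exists 1. split. lra. field.
Qed.
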